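(* Let $X$ be a Banach space and $Y$ a normed space over $K$, let $M>0$, and let $\{F_\alpha\}_{\alpha\in I}$ ($I$ an index set) be a family of continuous $M$-contraction operators from $X$ into $Y$. Suppose that (a) for every $x\in X$ there is a positive number $c_x$ with $\|F_\alpha(x)\|_Y\le c_x$ for every $\alpha\in I$; and (b) there exists a positive constant $L$ such that $\|F_\alpha(x_1+x_2)\|_Y\le L\,\|F_\alpha(x_1)+F_\alpha(x_2)\|_Y$ for every $\alpha\in I$ and all $x_1,x_2\in X$. Then $\{F_\alpha\}$ is uniformly norm bounded, i.e., there is a positive constant $c$ with $\|F_\alpha\|_{B(X,Y)}\le c$ for every $\alpha\in I$.
   Context: $K$ is $\mathbb{R}$ or $\mathbb{C}$; all normed spaces are nontrivial. Operators are arbitrary (not necessarily linear) maps. For normed spaces $X,Y$ and a map $F:X\to Y$, set $\|F\|_{B(X,Y)}=\max\left(\sup_{x\neq 0,x\in X}\frac{\|F(x)\|_Y}{\|x\|_X},\ \|F(0)\|_Y\right)\in[0,\infty]$, and let $B(X,Y)$ be the set of maps $F:X\to Y$ with $\|F\|_{B(X,Y)}<\infty$. An operator $F:X\to Y$ is an $M$-contraction operator if $\|F(kx)\|_Y\le M|k|\,\|F(x)\|_Y$ for every scalar $k\neq 0$ and every $x\neq 0$ in $X$. *)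

(* Defs.v *)
From HB Require Import structures.
From mathcomp Require Import all_boot all_order all_algebra.
From mathcomp Require Import all_classical all_reals all_analysis.
From mathcomp Require Import complex.
Set Implicit Arguments. Unset Strict Implicit. Unset Printing Implicit Defensive.
Import Order.TTheory GRing.Theory Num.Theory.
Import numFieldNormedType.Exports.
Local Open Scope ring_scope.

Definition M_contraction (K : numFieldType) (X Y : normedModType K)
    (M : K) (F : X -> Y) : Prop :=
  forall (k : K) (x : X), k != 0 -> x != 0 ->
    `|F (k *: x)| <= M * `|k| * `|F x|.

(* ||F||_{B(X,Y)} <= c, where
   ||F||_{B(X,Y)} = max (sup_{x<>0} ||F x||/||x||, ||F 0||);
   written out: every quotient ||F x||/||x|| (x <> 0) and ||F 0|| are <= c. *)
Definition Bnorm_le (K : numFieldType) (X Y : normedModType K)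
    (F : X -> Y) (c : K) : Prop :=
  (forall x : X, x != 0 -> `|F x| / `|x| <= c) /\ `|F 0| <= c.

Definition theorem3_over (K : numFieldType) : Prop :=
  forall (X : completeNormedModType K) (Y : normedModType K)
         (M : K) (I : Type) (F : I -> X -> Y),
    (exists x : X, x != 0) -> (exists y : Y, y != 0) ->
    0 < M ->
    (forall a : I, continuous (F a)) ->
    (forall a : I, M_contraction M (F a)) ->
    (forall x : X, exists cx : K, 0 < cx /\ forall a : I, `|F a x| <= cx) ->
    (exists L : K, 0 < L /\
       forall (a : I) (x1 x2 : X), `|F a (x1 + x2)| <= L * `|F a x1 + F a x2|) ->
    exists c : K, 0 < c /\ forall a : I, Bnorm_le (F a) c.

(* Main.v *)
Require Import Defs.
From HB Require Import structures.
From mathcomp Require Import all_boot all_order all_algebra.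
From mathcomp Require Import all_classical all_reals all_analysis.
From mathcomp Require Import complex.
From mathcomp Require Import ring.
Import Order.TTheory GRing.Theory Num.Theory.
Import numFieldNormedType.Exports.
Local Open Scope ring_scope.

Section Gen.
Variable K : numFieldType.
Hypothesis archi : forall c : K, 0 < c -> exists n : nat, c < n%:R.

Definition mn (a b : K) := if a <= b then a else b.

Lemma mn_prop {a b : K} : 0 < a -> 0 < b -> [/\ 0 < mn a b, mn a b <= a & mn a b <= b].
Proof.
move=> a0 b0; rewrite /mn; case: ifP => ab; first by rewrite lexx ab a0.
have := real_leVge (gtr0_real a0) (gtr0_real b0); rewrite ab /= => ba.
by rewrite lexx ba b0.
Qed.

Lemma half_le {u : K} : 0 <= u -> u / 2 <= u.
Proof.
move=> u0; rewrite [X in _ <= X](splitr u) lerDl.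
by rewrite divr_ge0.
Qed.

Variables (X : completeNormedModType K) (Y : normedModType K) (I : Type)
  (F : I -> X -> Y).
Hypothesis Fc : forall a, continuous (F a).
Hypothesis Fb : forall x, exists cx, 0 < cx /\ forall a, `|F a x| <= cx.

Section NB.
Hypothesis NB : forall (n : nat) (x : X) (r : K), 0 < r ->
  exists y, `|x - y| < r /\ exists a, n%:R < `|F a y|.

Definition Pstep (n : nat) (x : X) (r : K) (p : X * K) :=
  [/\ 0 < p.2, `|x - p.1| + p.2 <= r, p.2 <= n.+1%:R^-1 &
      forall z, `|p.1 - z| < p.2 *+ 2 -> exists a, n%:R < `|F a z|].

Lemma step n x r : 0 < r -> exists p : X * K, Pstep n x r p.
Proof.
move=> r0; have [y [xy [a Hay]]] := NB n x r r0.
pose e := `|F a y| - n%:R.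
have e0 : 0 < e by rewrite subr_gt0.
have := Fc a y => /cvgr_dist_lt/(_ _ e0)/nbhs_ballP[d /= d0 Hd].
pose s := r - `|x - y|.
have s0 : 0 < s by rewrite subr_gt0.
have n0 : 0 < n.+1%:R^-1 :> K by rewrite invr_gt0 ltr0Sn.
have [m0 md ms] := mn_prop d0 s0.
have [m1 m1a m1b] := mn_prop m0 n0.
set m := mn (mn d s) n.+1%:R^-1 in m1 m1a m1b.
exists (y, m / 2); split => /=.
- by rewrite divr_gt0.
- rewrite -lerBrDl; apply: le_trans (half_le (ltW m1)) _.
  exact: le_trans m1a ms.
- exact: le_trans (half_le (ltW m1)) m1b.
- move=> z yz; exists a.
  have yz' : ball y d z.
    rewrite -ball_normE /ball_ /=; apply: lt_le_trans yz _.
    rewrite mulr2n -splitr; exact: le_trans m1a md.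
  have := Hd z yz' => /= Hz.
  have H1 : `|F a y| <= `|F a y - F a z| + `|F a z|.
    by rewrite -{1}(subrK (F a z) (F a y)) ler_normD.
  have H2 : `|F a y| < e + `|F a z| by apply: le_lt_trans H1 _; rewrite ltrD2r.
  by move: H2; rewrite /e addrAC -addrA ltrDl subr_gt0.
Qed.

Lemma nobad : False.
Proof.
have /choice[g Hg] : forall q : nat * (X * K), exists p : X * K,
    0 < q.2.2 -> Pstep q.1 q.2.1 q.2.2 p.
  move=> [n [x r]] /=; have [r0|r0] := pselect (0 < r).
    by have [p Hp] := step n x r r0; exists p.
  by exists (0, 0).
pose fix s k := if k is k'.+1 then g (k', s k') else ((0 : X), (1 : K)).
have sE k : s k.+1 = g (k, s k) by [].
have s0 k : 0 < (s k).2.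
  elim: k => [|k IH]; first exact: ltr01.
  by rewrite sE; case: (Hg (k, s k) IH).
have sS k : Pstep k (s k).1 (s k).2 (s k.+1) by rewrite sE; exact: (Hg (k, s k) (s0 k)).
have nest k d : `|(s k).1 - (s (k + d)%N).1| + (s (k + d)%N).2 <= (s k).2.
  elim: d => [|d IH]; first by rewrite addn0 subrr normr0 add0r.
  rewrite addnS; have [_ h _ _] := sS (k + d)%N.
  apply: le_trans (lerD (ler_distD (s (k + d)%N).1 _ _) (lexx _)) _.
  rewrite -addrA; apply: le_trans IH; by rewrite lerD2l.
have cv : cvg ((fun k => (s k).1) @ \oo)%classic.
  apply: cauchy_cvg; apply: cauchy_exP => e e0.
  have [N HN] : exists N : nat, e^-1 < N%:R by apply: archi; rewrite invr_gt0.
  exists (s N.+1).1; exists N.+1 => // m Hm.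
  rewrite -ball_normE /ball_ /=.
  have := nest N.+1 (m - N.+1)%N; rewrite subnKC // => Hn.
  apply: le_lt_trans (le_trans _ Hn) _; first by rewrite lerDl ltW.
  have [_ _ h _] := sS N; apply: le_lt_trans h _.
  rewrite -[e in _ < e]invrK ltf_pV2 ?posrE ?invr_gt0 ?ltr0Sn //.
  by apply: lt_le_trans HN _; rewrite ler_nat.
move/cvg_ex: cv => [l Hl].
have [c [c0 Hc]] := Fb l.
have [k Hk] := archi c c0.
have := Hl => /cvgr_dist_lt/(_ _ (s0 k.+1))[N _ HN].
pose m := maxn N k.+1.
have lm : `|l - (s m).1| < (s k.+1).2 by apply: HN; rewrite /= leq_maxl.
have := nest k.+1 (m - k.+1)%N; rewrite subnKC ?leq_maxr // => nm.
have [_ _ _ bad] := sS k.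
have [a Ha] : exists a, k%:R < `|F a l|.
  apply: bad; apply: le_lt_trans (ler_distD (s m).1 _ _) _.
  rewrite mulr2n; apply: ler_ltD; first by apply: le_trans nm; rewrite lerDl ltW.
  by rewrite distrC.
have := lt_le_trans (lt_le_trans Hk (ltW Ha)) (Hc a).
by rewrite ltxx.
Qed.
End NB.

Lemma ball_bound : exists (n : nat) (x0 : X) (r : K), 0 < r /\
  forall z, `|x0 - z| < r -> forall a, `|F a z| <= n%:R.
Proof.
apply: contrapT => H; apply: nobad => n x r r0.
apply: contrapT => H2; apply: H; exists n, x, r; split => // z xz a.
apply: contrapT => Hz; apply: H2; exists z; split => //; exists a.
rewrite real_ltNge ?realn ?normr_real //; exact/negP.
Qed.

End Gen.

Lemma gen (K : numFieldType) :
  (forall c : K, 0 < c -> exists n : nat, c < n%:R) -> theorem3_over K.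
Proof.
move=> archi X Y M I F _ _ M0 Fc FM Fb [L [L0 FL]].
have [n [x0 [r [r0 Hb]]]] := @ball_bound K archi X Y I F Fc Fb.
have [c1 [c10 Hc1]] := Fb (- x0).
have [c0 [c00 Hc0]] := Fb 0.
pose C := M * (2 / r) * (L * (n%:R + c1)).
have C0 : 0 <= C.
  rewrite /C; apply: mulr_ge0; first apply: mulr_ge0; [exact: ltW | |].
    by rewrite divr_ge0 // ltW.
  by apply: mulr_ge0; [exact: ltW | apply: addr_ge0; [exact: ler0n | exact: ltW]].
exists (C + c0); split; first by rewrite ltr_pwDr.
move=> a; split; last by rewrite ler_wpDl.
move=> x x0'.
apply: le_trans (_ : C <= C + c0); last by rewrite lerDl ltW.
have nx0 : 0 < `|x| by rewrite normr_gt0.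
pose k := 2 * `|x| / r.
have k0 : 0 < k by rewrite /k divr_gt0 // mulr_gt0.
pose z := k^-1 *: x.
have xz : x = k *: z by rewrite /z scalerA mulfV ?gt_eqF // scale1r.
have z0 : z != 0 by rewrite /z scaler_eq0 negb_or invr_eq0 gt_eqF.
have nz : `|z| = r / 2.
  rewrite /z normrZ ger0_norm ?invr_ge0 ?ltW // /k.
  field; apply/andP; split; rewrite gt_eqF //.
have Fz : `|F a z| <= L * (n%:R + c1).
  have := FL a (z + x0) (- x0); rewrite addrK => h; apply: le_trans h _.
  apply: ler_wpM2l; first exact: ltW. apply: le_trans (ler_normD _ _) _.
  apply: lerD; last exact: Hc1.
  apply: Hb; rewrite opprD addrCA subrr addr0 normrN nz.
  by rewrite [X in _ < X](splitr r) ltrDl divr_gt0.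
rewrite ler_pdivrMr //.
have := FM a k z (lt0r_neq0 k0) z0; rewrite -xz (ger0_norm (ltW k0)) => h.
apply: le_trans h _.
have -> : C * `|x| = M * k * (L * (n%:R + c1)) by rewrite /C /k; ring.
apply: ler_wpM2l => //; exact: mulr_ge0 (ltW M0) (ltW k0).
Qed.

Lemma archiR (R : realType) (c : R) : 0 < c -> exists n : nat, c < n%:R.
Proof. by move=> _; exists (Num.truncn c).+1; exact: truncnS_gt. Qed.

Lemma archiC (R : realType) (c : R[i]) : 0 < c -> exists n : nat, c < n%:R.
Proof.
move=> c0; have := c0; rewrite ltcE => /andP[/eqP Hi Hr].
have [n Hn] := @archiR R (complex.Re c) Hr; exists n.
rewrite -(rmorph_nat (real_complex R)) ltcE /=.
by rewrite Hi eqxx Hn.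
Qed.

Theorem theorem3 (R : realType) : theorem3_over R /\ theorem3_over R[i].
Proof. split; apply: gen; [exact: archiR | exact: archiC]. Qed.
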